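(* Let $K$ be a finite simplicial complex, $\mathcal V$ a multivector field on $K$, $N\subseteq K$ closed, and let $(P,E)$ be an index pair in $N$ under $\mathcal V$. Let $\mathcal A$ be a set of multivectors of $\mathcal V$ such that $\langle\mathcal A\rangle\subseteq N$, $\langle\mathcal A\rangle\cap E=\emptyset$ and $\mathrm{mo}(\langle\mathcal A\rangle)\subseteq P$. Then $(P\cup\langle\mathcal A\rangle,E)$ is an index pair in $N$ under $\mathcal V$ (namely, for $\mathrm{inv}_{\mathcal V}((P\cup\langle\mathcal A\rangle)\setminus E)$).
   Context: $\sigma\le\tau$ means $\sigma$ is a face of $\tau$; $\mathrm{cl}(A)$ is the set of faces of simplices of $A$; $A$ is closed if $A=\mathrm{cl}(A)$; $\mathrm{mo}(A)=\mathrm{cl}(A)\setminus A$. A multivector is a convex subset of $K$ w.r.t. $\le$; a multivector field $\mathcal V$ is a partition of $K$ into multivectors; $[\sigma]_{\mathcal V}$ is the multivector containing $\sigma$. For a set $\mathcal A$ of multivectors, $\langle\mathcal A\rangle=\bigcup_{A\in\mathcal A}A$. $F_{\mathcal V}(\sigma)=[\sigma]_{\mathcal V}\cup\mathrm{cl}(\sigma)$ and $F_{\mathcal V}(A)=\bigcup_{\sigma\in A}F_{\mathcal V}(\sigma)$. A path is a finite sequence with $\sigma_j\in F_{\mathcal V}(\sigma_{j-1})$; a solution is a bi-infinite one. A multivector $V$ is critical if $H_k(\mathrm{cl}(V),\mathrm{mo}(V))\ne0$ for some $k$, regular otherwise. A solution $\rho$ is essential if whenever $[\rho(i)]_{\mathcal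 V}$ is regular there are $i^-<i<i^+$ with $[\rho(i^\pm)]_{\mathcal V}\ne[\rho(i)]_{\mathcal V}$. $\mathrm{inv}_{\mathcal V}(A)$ is the set of simplices of $A$ lying on an essential solution with image in $A$. An index pair in $N$ for an invariant set $S$ (under $\mathcal V$) is a pair of closed sets $E\subseteq P\subseteq N$ with: (1) $F_{\mathcal V}(E)\cap N\subseteq E$; (2) $F_{\mathcal V}(P)\cap N\subseteq P$; (3) $F_{\mathcal V}(P\setminus E)\subseteq N$; (4) $S=\mathrm{inv}_{\mathcal V}(P\setminus E)$. ''Index pair in $N$ under $\mathcal V$'' means an index pair in $N$ for $\mathrm{inv}_{\mathcal V}(P\setminus E)$. *)

(* Defs.v *)
From HB Require Import structures.
From mathcomp Require Import all_boot all_order all_algebra.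
From mathcomp Require Import boolp.
Set Implicit Arguments. Unset Strict Implicit. Unset Printing Implicit Defensive.
Import GRing.Theory Num.Theory.
Local Open Scope ring_scope.

Section MVF.
Variable V : finType.
Notation simplex := {set V}.
Notation cset := {set {set V}}.

(* A finite abstract simplicial complex: nonempty simplices, closed under
   nonempty subsets.  The face relation sigma <= tau is sigma \subset tau. *)
Definition simplicial_complex (K : cset) : Prop :=
  set0 \notin K /\
  forall s t : simplex, s \in K -> t \subset s -> t != set0 -> t \in K.

Variable K : cset.

Definition cl (A : cset) : cset := [set s in K | [exists t in A, s \subset t]].
Definition mo (A : cset) : cset := cl A :\: A.
Definition is_closed (A : cset) : bool := cl A == A.

Definition convex (A : cset) : Prop :=
  forall x y z : simplex, x \in A -> z \in A -> y \in K ->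
    x \subset y -> y \subset z -> y \in A.

Definition multivector_field (Vf : {set cset}) : Prop :=
  partition Vf K /\ forall A, A \in Vf -> convex A.

Variable Vf : {set cset}.

Definition mv_of (s : simplex) : cset := pblock Vf s.
Definition Fv (s : simplex) : cset := mv_of s :|: cl [set s].
Definition FvS (A : cset) : cset := \bigcup_(s in A) Fv s.
Definition cover_of (AA : {set cset}) : cset := cover AA.

(* Relative simplicial homology H_k(cl A, mo A) with coefficients in a field R.
   Chains are finitely supported functions on simplices; a relative k-chain is
   supported on simplices of cl A \ mo A with k+1 vertices. Orientation is
   induced by the order of V (enum_rank). *)
Variable R : fieldType.

Definition face_sign (sg tau : simplex) : R :=
  \sum_(v in sg :\: tau) (-1) ^+ #|[set w in sg | (enum_rank w < enum_rank v)%N]|.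

Definition rel_bd (A : cset) (c : {ffun simplex -> R}) : {ffun simplex -> R} :=
  [ffun tau => if tau \in cl A :\: mo A then
     \sum_(sg in cl A :\: mo A | (tau \subset sg) && (#|sg| == #|tau|.+1))
        face_sign sg tau * c sg
   else 0].

Definition rel_chain (A : cset) (k : nat) (c : {ffun simplex -> R}) : Prop :=
  forall s, c s != 0 -> (s \in cl A :\: mo A) && (#|s| == k.+1).

Definition homology_nonzero (A : cset) (k : nat) : Prop :=
  exists c, rel_chain A k c /\ rel_bd A c = 0 /\
    ~ exists d, rel_chain A k.+1 d /\ rel_bd A d = c.

Definition critical (A : cset) : Prop := exists k, homology_nonzero A k.
Definition regular (A : cset) : Prop := ~ critical A.

Definition solution (rho : int -> simplex) : Prop :=
  forall i : int, rho (i + 1)%R \in Fv (rho i).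

Definition essential (rho : int -> simplex) : Prop :=
  solution rho /\
  forall i : int, regular (mv_of (rho i)) ->
    (exists j : int, (j < i)%R /\ mv_of (rho j) != mv_of (rho i)) /\
    (exists j : int, (i < j)%R /\ mv_of (rho j) != mv_of (rho i)).

Definition inv (A : cset) : cset :=
  [set s in A | `[< exists rho, essential rho /\ (forall i, rho i \in A) /\
                                 exists i, rho i = s >]].

Definition index_pair (N S P E : cset) : Prop :=
  [/\ is_closed P, is_closed E, E \subset P & P \subset N] /\
  [/\ FvS E :&: N \subset E,
      FvS P :&: N \subset P,
      FvS (P :\: E) \subset N &
      S = inv (P :\: E)].

Definition index_pair_under (N P E : cset) : Prop :=
  index_pair N (inv (P :\: E)) P E.

End MVF.

(* Main.v *)
Require Import Defs.
From HB Require Import structures.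
From mathcomp Require Import all_boot all_order all_algebra.
From mathcomp Require Import boolp.

Section Aux.
Variable V : finType.
Implicit Types (K X Y : {set {set V}}).

Lemma cl_sub K X Y : is_closed K Y -> X \subset Y -> cl K X \subset Y.
Proof.
move=> /eqP clY XY; apply/subsetP=> s Hs; rewrite -clY; move: Hs; rewrite !inE => /andP[sK /existsP[t /andP[tX st]]].
by rewrite sK; apply/existsP; exists t; rewrite st (subsetP XY).
Qed.

Lemma cl_mono K X Y : X \subset Y -> cl K X \subset cl K Y.
Proof.
move=> XY; apply/subsetP=> s; rewrite !inE => /andP[sK /existsP[t /andP[tX st]]].
by rewrite sK; apply/existsP; exists t; rewrite st (subsetP XY).
Qed.

Lemma cl_id K X : X \subset K -> X \subset cl K X.
Proof.
move=> XK; apply/subsetP=> s sX; rewrite inE (subsetP XK) //.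
by apply/existsP; exists s; rewrite sX subxx.
Qed.

Lemma cl_U K X Y : cl K (X :|: Y) = cl K X :|: cl K Y.
Proof.
apply/setP=> s; rewrite !inE.
case: (s \in K) => //=; apply/existsP/orP.
- by case=> t /andP[]; rewrite inE => /orP[] tX st; [left|right]; apply/existsP; exists t; rewrite tX.
- by case=> /existsP[t /andP[tX st]]; exists t; rewrite inE tX ?orbT.
Qed.
End Aux.

Theorem proposition29 (V : finType) (R : fieldType)
  (K : {set {set V}}) (Vf : {set {set {set V}}}) (N P E : {set {set V}})
  (AA : {set {set {set V}}}) :
  simplicial_complex K ->
  multivector_field K Vf ->
  N \subset K -> is_closed K N ->
  index_pair_under K Vf R N P E ->
  AA \subset Vf ->
  cover_of AA \subset N ->
  cover_of AA :&: E = set0 ->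
  mo K (cover_of AA) \subset P ->
  index_pair_under K Vf R N (P :|: cover_of AA) E.
Proof.
move=> _ [part _] NK clN [[clP clE EP PN] [h1 h2 h3 h4]] AAV AN AE moP.
set A := cover_of AA in AN AE moP *.
have AK : A \subset K by apply: subset_trans AN NK.
have triv : trivIset Vf by case/and3P: part.
have mvA : forall s, s \in A -> mv_of Vf s \subset A.
  move=> s; rewrite /A /cover_of /cover => /bigcupP[B BA sB].
  rewrite /mv_of (def_pblock triv (subsetP AAV _ BA) sB).
  exact: bigcup_sup.
have clA : cl K A \subset P :|: A.
  apply/subsetP=> x xcl; rewrite inE; case xA: (x \in A); rewrite ?orbT //.
  by rewrite (subsetP moP) // inE xA.
have clsA : forall s, s \in A -> cl K [set s] \subset P :|: A.
  move=> s sA; apply: subset_trans clA; apply: cl_mono; by rewrite sub1set.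
have clsN : forall s, s \in N -> cl K [set s] \subset N.
  by move=> s sN; apply: cl_sub clN _; rewrite sub1set.
have PAE : (P :|: A) :\: E = (P :\: E) :|: A.
  apply/setP=> x; rewrite !inE; case xA: (x \in A); rewrite ?orbT ?andbT ?orbF //=.
  apply/negP=> xE; have : x \in A :&: E by rewrite inE xA.
  by rewrite AE inE.
split; split => //.
- apply/eqP; rewrite cl_U (eqP clP); apply/setP=> x; rewrite inE.
  apply/idP/idP.
  + case/orP=> [xP|xc]; [by rewrite inE xP | exact: (subsetP clA)].
  + by rewrite inE => /orP[xP|xA]; rewrite ?xP //; rewrite (subsetP (@cl_id _ K A AK)) ?orbT.
- by apply: subset_trans EP (subsetUl _ _).
- by rewrite subUset PN AN.
- apply/subsetP=> x; rewrite inE => /andP[/bigcupP[s]].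
  rewrite inE => /orP[sP xF xN|sA xF xN].
  + rewrite inE (subsetP h2) //; rewrite inE xN andbT.
    by apply/bigcupP; exists s.
  + move: xF; rewrite /Fv inE => /orP[xm|xc].
    * by rewrite inE (subsetP (mvA s sA)) ?orbT.
    * exact: (subsetP (clsA s sA)).
- rewrite PAE; apply/subsetP=> x /bigcupP[s]; rewrite inE => /orP[sPE xF|sA xF].
  + by apply: (subsetP h3); apply/bigcupP; exists s.
  + move: xF; rewrite /Fv inE => /orP[xm|xc].
    * by apply: (subsetP AN); apply: (subsetP (mvA s sA)).
    * by apply: (subsetP (clsN s (subsetP AN _ sA))).
Qed.
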